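(* For every prime $p$, there exist a conic $Q\subset\mathbb P^2$ defined over $\mathbb F_{p^2}$ and a point $t\in C\cap Q$ (over $\overline{\mathbb F}_p$) such that $[\mathbb F_{p^2}(t):\mathbb F_{p^2}]=p+1$.
   Context: $C\subset\mathbb P^2$ is the Fermat curve $X_1^{p+1}+X_2^{p+1}+X_3^{p+1}=0$. Conics include degenerate ones (zero loci of nonzero homogeneous quadratic forms over $\mathbb F_{p^2}$). $\mathbb F_{p^2}(t)$ is the field generated over $\mathbb F_{p^2}$ by the ratios of coordinates of $t$. *)

(* Defs.v *)
From HB Require Import structures.
From mathcomp Require Import all_boot all_order all_algebra all_field.
Set Implicit Arguments. Unset Strict Implicit. Unset Printing Implicit Defensive.
Import GRing.Theory.
Local Open Scope ring_scope.

(* A homogeneous quadratic form over F in X_1, X_2, X_3, given by its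
   coefficients c i j for i <= j (the entries with i > j are ignored):
   Q(X) = \sum_{i <= j} c i j X_i X_j. *)
Definition qform_nonzero (F : fieldType) (c : 'I_3 -> 'I_3 -> F) : Prop :=
  exists i j : 'I_3, (i <= j)%N /\ c i j != 0.

Definition qform_eval (F : fieldType) (L : fieldExtType F)
    (c : 'I_3 -> 'I_3 -> F) (x : 'I_3 -> L) : L :=
  \sum_(i < 3) \sum_(j < 3 | (i <= j)%N) (c i j)%:A * x i * x j.

Definition proj_point (F : fieldType) (L : fieldExtType F) (x : 'I_3 -> L) : Prop :=
  exists i, x i != 0.

Definition on_fermat (F : fieldType) (L : fieldExtType F) (p : nat)
    (x : 'I_3 -> L) : Prop :=
  \sum_(i < 3) x i ^+ p.+1 = 0.

Definition coord_ratios (F : fieldType) (L : fieldExtType F) (x : 'I_3 -> L) : seq L :=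
  [seq x i / x j | i <- enum 'I_3, j <- [seq j <- enum 'I_3 | x j != 0]].

Definition field_of_point (F : fieldType) (L : fieldExtType F) (x : 'I_3 -> L)
  : {vspace L} :=
  (<<1%VS & coord_ratios x>>)%VS.

(* Main.v *)
Require Import Defs.
From HB Require Import structures.
From mathcomp Require Import all_boot all_order all_algebra all_field all_solvable.
From mathcomp Require Import zify ring.
From Stdlib Require Import Lia.
Import GRing.Theory.
Local Open Scope ring_scope.

Lemma F_data p (hp : prime p) (F : finFieldType) (hF : #|F| = (p ^ 2)%N) :
  exists lam w : F, [/\ w != 0, 1 + w + lam ^+ p.+1 * w ^+ 2 = 0 &
     (p.+1).-primitive_root (w ^+ p.-1)^-1].
Proof.
have pcharF : p \in [pchar F] := card_finPcharP hF hp.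
have p_gt1 := prime_gt1 hp.
have frobD (u v : F) : (u + v) ^+ p = u ^+ p + v ^+ p.
  by rewrite -!(pFrobenius_autE pcharF) rmorphD.
have frobN (u : F) : (- u) ^+ p = - u ^+ p.
  by rewrite -!(pFrobenius_autE pcharF) rmorphN.
have frob2 (u : F) : (u ^+ p) ^+ p = u.
  by rewrite -exprM mulnn -hF expf_card.
pose n := (p ^ 2).-1.
have n_gt0 : (0 < n)%N by rewrite /n -subn1 subn_gt0 -mulnn; nia.
have np : n = (p.-1 * p.+1)%N by rewrite /n -mulnn; nia.
have [g Hg] : exists g : F, n.-primitive_root g.
  pose rs := [seq z <- enum F | z != 0].
  have /hasP[g _ Hg] : has n.-primitive_root rs; last by exists g.
  apply: has_prim_root => //.
  - apply/allP => z; rewrite mem_filter => /andP[nz _].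
    rewrite unity_rootE; apply/eqP; apply: (mulIf nz).
    by rewrite mul1r -exprSr /n prednK ?expn_gt0 ?prime_gt0 // -hF expf_card.
  - by rewrite filter_uniq ?enum_uniq.
  - rewrite size_filter /n -hF.
    rewrite -(cardC1 (0:F)) cardE /enum_mem -enumT /= enumT.
    by rewrite size_filter filter_predT.
clearbody n.
pose rho := g ^+ p.-1.
have Hrho : (p.+1).-primitive_root rho.
  have := exp_prim_root Hg p.-1.
  have -> : gcdn p.-1 n = p.-1 by rewrite np; apply/gcdn_idPl; exact: dvdn_mulr.
  by rewrite np mulKn // -subn1 subn_gt0.
have g0 : g != 0.
  apply/negP => /eqP g0; have := prim_expr_order Hg.
  by rewrite g0 expr0n (negbTE (lt0n_neq0 n_gt0)) => /eqP; rewrite eq_sym oner_eq0.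
have gp : g ^+ p = g * rho by rewrite /rho -exprS prednK ?prime_gt0.
have rho1 : 1 + rho != 0.
  apply/negP; rewrite addrC addr_eq0 => /eqP r1.
  have := eq_prim_root_expr Hrho 2 0.
  rewrite r1 expr0 sqrrN expr1n eqxx modn_small; last by lia.
  by rewrite mod0n.
pose s := g + g ^+ p.
have s0 : s != 0 by rewrite /s gp -{1}(mulr1 g) -mulrDr mulf_neq0.
have sp : s ^+ p = s by rewrite /s frobD frob2 addrC.
exists (g / s), (- s / g).
have w0 : - s / g != 0 by rewrite mulf_neq0 ?oppr_eq0 ?invr_eq0.
split => //.
  rewrite exprS expr_div_n sp gp.
  have -> : s = g * (1 + rho) by rewrite /s gp mulrDr mulr1.
  by field; rewrite g0 rho1.
have -> : (- s / g) ^+ p.-1 = rho^-1.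
  apply: (mulIf (expf_neq0 p.-1 g0)); rewrite -exprMn mulrVK ?unitfE //.
  rewrite mulVf ?expf_neq0 //.
  have ns0 : - s != 0 by rewrite oppr_eq0.
  apply: (mulIf ns0); rewrite mul1r -exprSr prednK ?prime_gt0 //.
  by rewrite frobN sp.
by rewrite invrK.
Qed.
Lemma frob_root (F : finFieldType) (L : fieldExtType F) p (hp : prime p)
  (hF : #|F| = (p ^ 2)%N) (m : {poly L}) z :
  m \is a polyOver 1%VS -> root m z -> root m (z ^+ (p ^ 2)).
Proof.
have pcharL : p \in [pchar L] by rewrite pchar_lalg (card_finPcharP hF hp).
move=> /polyOver1P[q ->] /rootP Hz; apply/rootP.
pose f := pFrobenius_aut pcharL.
have H : (map_poly f (map_poly f (map_poly (in_alg L) q))).[f (f z)] = 0.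
  by rewrite !horner_map Hz !rmorph0.
rewrite -H -!map_poly_comp.
have -> : z ^+ (p ^ 2) = f (f z) by rewrite /f !pFrobenius_autE -exprM mulnn.
congr horner; apply: eq_map_poly => a /=.
rewrite /f !pFrobenius_autE -exprM.
by rewrite mulnn -hF -(rmorphXn (in_alg L)) /= expf_card.
Qed.

Theorem proposition7p2 (p : nat) (hp : prime p)
    (F : finFieldType) (hF : #|F| = (p ^ 2)%N) :
  exists (L : fieldExtType F) (c : 'I_3 -> 'I_3 -> F) (t : 'I_3 -> L),
    [/\ qform_nonzero c, proj_point t, on_fermat p t,
        qform_eval c t = 0 &
        \dim (field_of_point t) = p.+1].
Proof.
have p_gt1 := prime_gt1 hp.
have [lam [w [w0 Hfer Hth]]] := @F_data p hp F hF.
pose P : {poly F} := 'X^(p.+1) - w%:P.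
have sP : size P = p.+2 by rewrite size_XnsubC.
have P0 : P != 0 by rewrite -size_poly_eq0 sP.
case: (FinSplittingFieldFor P0) => L [rs Hrs _].
have mapPP : map_poly (in_alg L) P = 'X^(p.+1) - (w%:A)%:P.
  by rewrite rmorphB /= map_polyXn map_polyC.
have [x Hx] : exists x : L, x ^+ p.+1 = w%:A.
  case: rs Hrs => [|r rs] Hrs.
    move/eqp_size: Hrs; rewrite big_nil size_poly1 size_map_poly sP //.
  exists r; have : root (map_poly (in_alg L) P) r.
    by rewrite (eqp_root Hrs) root_prod_XsubC mem_head.
  by rewrite mapPP rootE !hornerE subr_eq0 => /eqP.
have x0 : x != 0.
  apply/negP => /eqP x0; move: Hx; rewrite x0 expr0n /= => /esym/eqP.
  by rewrite scaler_eq0 oner_eq0 orbF (negbTE w0).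
pose c := fun i j : 'I_3 => if (val i == 0%N) && (val j == 2%N) then (1 : F)
   else if (val i == 1%N) && (val j == 1%N) then - lam else 0.
pose t := fun i : 'I_3 => match val i with 0 => 1 | 1 => x | _ => lam%:A * x ^+ 2 end.
exists L, c, t; split.
- by exists ord0, (@Ordinal 3 2 isT); rewrite /c /= oner_neq0.
- by exists ord0; rewrite /t /= oner_neq0.
- rewrite /on_fermat !big_ord_recl big_ord0 /t /=.
  rewrite exprMn -exprM mulnC exprM Hx expr1n.
  have := congr1 (in_alg L) Hfer.
  rewrite !rmorphD rmorphM !rmorphXn rmorph1 rmorph0 /= => H.
  by rewrite addr0 addrA.
- rewrite /qform_eval; under eq_bigr do rewrite big_mkcond.
  rewrite !big_ord_recl !big_ord0 /c /t /=.
  rewrite !scale0r scale1r scaleNr; ring.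
have tin : forall i, t i \in <<1; x>>%VS.
  move=> i; rewrite /t; case: (val i) => [|[|k]].
  - exact: mem1v.
  - exact: memv_adjoin.
  - apply: rpredM; last by apply: rpredX; exact: memv_adjoin.
    by apply: rpredZ; exact: mem1v.
have Ex : field_of_point t = <<1; x>>%VS.
  apply/eqP; rewrite eqEsubv; apply/andP; split.
    apply/Fadjoin_seqP; split; first exact: sub1v.
    move=> r /allpairsPdep[i [j [_ _ ->]]].
    by apply: rpredM; rewrite ?memvV tin.
  apply/FadjoinP; split; first exact: sub1v.
  apply: seqv_sub_adjoin.
  have -> : x = t (@Ordinal 3 1 isT) / t ord0 by rewrite /t /= divr1.
  apply: allpairs_f_dep; first by rewrite mem_enum.
  by rewrite mem_filter mem_enum /t /= oner_neq0.
rewrite Ex dim_Fadjoin dimv1 muln1.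
have sm := size_minPoly 1%VS x.
pose th := w ^+ p.-1.
have xp2 : x ^+ (p ^ 2) = x * th%:A.
  have e : (p ^ 2 = (p.+1 * p.-1).+1)%N by rewrite -mulnn; nia.
  by rewrite e exprSr exprM Hx -(rmorphXn (in_alg L)) mulrC.
have thp2 : th%:A ^+ (p ^ 2) = th%:A :> L.
  by rewrite -(rmorphXn (in_alg L)) -hF expf_card.
apply/eqP; rewrite eqn_leq; apply/andP; split.
  have : (size (minPoly 1%VS x) <= size (('X^(p.+1) - (w%:A)%:P)%R : {poly L}))%N.
    apply: dvdp_leq; first by rewrite -size_poly_eq0 size_XnsubC.
    apply: minPoly_dvdp.
      by apply: rpredB; [apply: rpredX; exact: polyOverX | rewrite polyOverC // rpredZ ?mem1v].
    by rewrite rootE !hornerE Hx subrr.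
  by rewrite size_XnsubC // sm ltnS.
pose rr := [seq x * th%:A ^+ k | k <- iota 0 p.+1].
have := @max_poly_roots _ (minPoly 1%VS x) rr.
rewrite size_map size_iota sm ltnS; apply.
- by rewrite monic_neq0 ?monic_minPoly.
- apply/allP => z /mapP[k _ ->]; elim: k => [|k IH].
    by rewrite expr0 mulr1 root_minPoly.
  have := @frob_root F L p hp hF _ _ (minPolyOver 1%VS x) IH.
  by rewrite exprMn xp2 -exprM mulnC exprM thp2 -mulrA -exprS.
rewrite map_inj_in_uniq ?iota_uniq // => i j; rewrite !mem_iota /= => Hi Hj.
move/(mulfI x0); rewrite -!(rmorphXn (in_alg L)) => /fmorph_inj /(congr1 GRing.inv).
move=> H; have : (th^-1)^+i == (th^-1)^+j by rewrite !exprVn H.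
rewrite (eq_prim_root_expr Hth) !modn_small //.
by move/eqP.
Qed.
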